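(* Let $\mathcal{X},\mathcal{Y}$ be finite, $p\in[1,\infty]$, $W$ a channel and $\tilde W$ a false channel from $\mathcal{X}$ to $\mathcal{Y}$, and let $\Delta_p=\|\tilde W-W\|_p$. If $\Delta_p\le\frac14$, then for every distribution $Q$ on $\mathcal{X}$, $$|\tilde I(Q,\tilde W)-I(Q,W)|\le2f_p(\Delta_p),$$ and $$|\tilde C(\tilde W)-C(W)|\le2f_p(\Delta_p),$$ where $f_p(t)=-t\,|\mathcal{Y}|^{1-1/p}\log\left(\frac{t}{|\mathcal{Y}|^{1/p}}\right)$ (with $1/p=0$ for $p=\infty$). Furthermore, $f_p$ is concave and non-decreasing on $[0,\frac14]$.
   Context: A channel is a conditional pmf $W(y|x)$; a false channel is any non-negative function $\tilde W(y|x)$. $I(Q,W)$ is mutual information of $Q(x)W(y|x)$ and $C(W)=\max_QI(Q,W)$. False mutual information: $\tilde I(Q,\tilde W)=\sum_{x,y}Q(x)\tilde W(y|x)\log\frac{\tilde W(y|x)}{\sum_{x'}Q(x')\tilde W(y|x')}$ with $0\log0=0$; false capacity $\tilde C(\tilde W)=\sup_Q\tilde I(Q,\tilde W)$. Norms: $\|f\|_p=(\sum_{x,y}|f(x,y)|^p)^{1/p}$ for $p<\infty$ and $\|f\|_\infty=\max_{x,y}|f(x,y)|$. *)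

(* Defs.v *)
From Stdlib Require Import Reals Lra.
Open Scope R_scope.

(* Finite alphabets: X = {0,...,nX-1}, Y = {0,...,nY-1}. *)

Fixpoint sumR (n : nat) (f : nat -> R) : R :=
  match n with
  | O => 0
  | S k => sumR k f + f k
  end.

(* max_{i<n} f i, starting from 0 (used only for non-negative f) *)
Fixpoint maxR (n : nat) (f : nat -> R) : R :=
  match n with
  | O => 0
  | S k => Rmax (maxR k f) (f k)
  end.

(* A (false) channel is given as a function W x y = W(y|x). *)
Definition is_channel (nX nY : nat) (W : nat -> nat -> R) : Prop :=
  (forall x y, (x < nX)%nat -> (y < nY)%nat -> 0 <= W x y) /\
  (forall x, (x < nX)%nat -> sumR nY (fun y => W x y) = 1).

Definition is_false_channel (nX nY : nat) (Wt : nat -> nat -> R) : Prop :=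
  forall x y, (x < nX)%nat -> (y < nY)%nat -> 0 <= Wt x y.

Definition is_distr (nX : nat) (Q : nat -> R) : Prop :=
  (forall x, (x < nX)%nat -> 0 <= Q x) /\ sumR nX Q = 1.

(* sum_{x,y} Q(x)W(y|x) log( W(y|x) / sum_{x'} Q(x')W(y|x') ).
   The convention 0 log 0 = 0 is automatic: when Q(x)W(y|x) = 0 the
   summand is 0 * (...) = 0 in Rocq, whatever the (total) ln returns. *)
Definition false_mi (nX nY : nat) (Q : nat -> R) (W : nat -> nat -> R) : R :=
  sumR nX (fun x => sumR nY (fun y =>
    Q x * W x y * ln (W x y / sumR nX (fun x' => Q x' * W x' y)))).

Definition mutual_info (nX nY : nat) (Q : nat -> R) (W : nat -> nat -> R) : R :=
  false_mi nX nY Q W.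

(* The set of values {I(Q,W) | Q distribution on X}; capacities are its lub. *)
Definition mi_values (nX nY : nat) (W : nat -> nat -> R) (r : R) : Prop :=
  exists Q, is_distr nX Q /\ r = mutual_info nX nY Q W.

Definition false_mi_values (nX nY : nat) (W : nat -> nat -> R) (r : R) : Prop :=
  exists Q, is_distr nX Q /\ r = false_mi nX nY Q W.

Inductive pext : Type := PFin (p : R) | PInf.

Definition valid_p (p : pext) : Prop :=
  match p with PFin q => 1 <= q | PInf => True end.

Definition inv_p (p : pext) : R :=
  match p with PFin q => / q | PInf => 0 end.

(* a^b for a >= 0, b > 0, with 0^b = 0 *)
Definition powR (a b : R) : R :=
  if Rle_dec a 0 then 0 else Rpower a b.

Definition norm_p (p : pext) (nX nY : nat) (f : nat -> nat -> R) : R :=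
  match p with
  | PFin q => powR (sumR nX (fun x => sumR nY (fun y => powR (Rabs (f x y)) q))) (/ q)
  | PInf => maxR nX (fun x => maxR nY (fun y => Rabs (f x y)))
  end.

Definition f_p (p : pext) (nY : nat) (t : R) : R :=
  - t * Rpower (INR nY) (1 - inv_p p) * ln (t / Rpower (INR nY) (inv_p p)).

Definition concave_on (a b : R) (g : R -> R) : Prop :=
  forall u v l, a <= u <= b -> a <= v <= b -> 0 <= l <= 1 ->
    l * g u + (1 - l) * g v <= g (l * u + (1 - l) * v).

Definition nondecreasing_on (a b : R) (g : R -> R) : Prop :=
  forall u v, a <= u <= b -> a <= v <= b -> u <= v -> g u <= g v.

(* Main.v *)
Require Import Defs.
From Stdlib Require Import Reals Lra Lia.
Open Scope R_scope.

Lemma sumR_ext n f g : (forall i, (i < n)%nat -> f i = g i) -> sumR n f = sumR n g.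
Proof. induction n; simpl; intros H; auto. rewrite IHn by (intros; apply H; lia). rewrite H by lia. reflexivity. Qed.

Lemma sumR_le n f g : (forall i, (i < n)%nat -> f i <= g i) -> sumR n f <= sumR n g.
Proof. induction n; simpl; intros H; [lra|]. assert (f n <= g n) by (apply H; lia).
 assert (sumR n f <= sumR n g) by (apply IHn; intros; apply H; lia). lra. Qed.

Lemma sumR_plus n f g : sumR n (fun i => f i + g i) = sumR n f + sumR n g.
Proof. induction n; simpl; [lra|]. rewrite IHn. lra. Qed.

Lemma sumR_minus n f g : sumR n (fun i => f i - g i) = sumR n f - sumR n g.
Proof. induction n; simpl; [lra|]. rewrite IHn. lra. Qed.

Lemma sumR_scal n c f : sumR n (fun i => c * f i) = c * sumR n f.
Proof. induction n; simpl; [lra|]. rewrite IHn. lra. Qed.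

Lemma sumR_const n c : sumR n (fun _ => c) = INR n * c.
Proof. induction n; [simpl; lra|]. cbn [sumR]. rewrite IHn, S_INR. lra. Qed.

Lemma sumR_abs n f : Rabs (sumR n f) <= sumR n (fun i => Rabs (f i)).
Proof. induction n; simpl. rewrite Rabs_R0; lra.
 eapply Rle_trans. apply Rabs_triang. lra. Qed.

Lemma sumR_nonneg n f : (forall i, (i < n)%nat -> 0 <= f i) -> 0 <= sumR n f.
Proof. intros H.
 replace 0 with (sumR n (fun _ => 0)) by (rewrite sumR_const; lra). apply sumR_le. auto. Qed.

Lemma sumR_term n f i : (forall j, (j < n)%nat -> 0 <= f j) -> (i < n)%nat -> f i <= sumR n f.
Proof. induction n; simpl; intros H Hi; [lia|].
 assert (0 <= sumR n f) by (apply sumR_nonneg; intros; apply H; lia).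
 destruct (Nat.eq_dec i n). subst. lra.
 assert (f i <= sumR n f) by (apply IHn; [intros; apply H; lia| lia]).
 assert (0 <= f n) by (apply H; lia). lra. Qed.

Lemma sumR_swap n m (f : nat -> nat -> R) :
  sumR n (fun x => sumR m (fun y => f x y)) = sumR m (fun y => sumR n (fun x => f x y)).
Proof. induction n; simpl.
 - rewrite sumR_const. lra.
 - rewrite IHn. rewrite <- sumR_plus. reflexivity. Qed.

Lemma maxR_ge n f i : (i < n)%nat -> f i <= maxR n f.
Proof. induction n; simpl; intros Hi; [lia|]. destruct (Nat.eq_dec i n). subst. apply Rmax_r.
 eapply Rle_trans. apply IHn; lia. apply Rmax_l. Qed.

Lemma maxR_nonneg n f : 0 <= maxR n f.
Proof. induction n; simpl. lra. eapply Rle_trans. apply IHn. apply Rmax_l. Qed.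

Definition g (t : R) : R := - t * ln t.

Lemma g0 : g 0 = 0.
Proof. unfold g. ring. Qed.

Lemma ln_le1 x : 0 < x -> ln x <= x - 1.
Proof. intros H. pose proof (exp_ineq1_le (ln x)). rewrite exp_ln in H0 by lra. lra. Qed.

Lemma ln_diff a b : 0 < a -> 0 < b -> a * (ln b - ln a) <= b - a.
Proof. intros Ha Hb. assert (0 < b / a) by (apply Rdiv_lt_0_compat; lra).
 pose proof (ln_le1 _ H). unfold Rdiv in H0. rewrite ln_mult in H0 by (auto; apply Rinv_0_lt_compat; lra).
 rewrite ln_Rinv in H0 by lra.
 apply Rmult_le_compat_l with (r := a) in H0; [|lra].
 replace (a * (b * / a - 1)) with (b - a) in H0 by (field; lra). lra. Qed.

Lemma ln_e_bound x : 0 < x -> ln x + 1 <= x * 3 - 1.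
Proof. intros H. assert (0 < exp 1) by apply exp_pos.
 pose proof (ln_le1 (x * exp 1)). rewrite ln_mult, ln_exp in H1 by lra.
 pose proof exp_le_3. assert (x * exp 1 <= x * 3) by (apply Rmult_le_compat_l; lra).
 assert (0 < x * exp 1) by (apply Rmult_lt_0_compat; lra). specialize (H1 H4). lra. Qed.

Lemma deriv_nonneg w : 0 < w <= /4 -> 0 <= -1 - ln w.
Proof. intros H. pose proof (ln_e_bound w ltac:(lra)). lra. Qed.

Lemma tangent w t : 0 < w -> 0 <= t -> g t <= g w + (-1 - ln w) * (t - w).
Proof. intros Hw Ht. destruct (Req_dec t 0) as [->|Ht0].
 - rewrite g0. unfold g. lra.
 - pose proof (ln_diff t w ltac:(lra) Hw). unfold g. nra. Qed.

Lemma B0 a b : 0 <= b -> b <= a -> a <= 5/4 -> a - b <= /4 ->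
  g a - g b <= g (a - b) /\ g b - g a <= g (a - b).
Proof. intros Hb Hba Ha Hd. set (d := a - b).
 destruct (Req_dec d 0) as [Hd0|Hd0].
 { assert (a = b) by (unfold d in Hd0; lra). subst a. rewrite Hd0, g0. lra. }
 destruct (Req_dec b 0) as [Hb0|Hb0].
 { subst b. assert (d = a) by (unfold d; lra). rewrite H, g0.
   assert (0 < a) by (unfold d in Hd0; lra).
   pose proof (ln_le1 a H0). unfold g. split; [lra|]. nra. }
 assert (0 < b) by lra. assert (0 < d) by (unfold d in *; lra). assert (0 < a) by lra.
 split.
 - assert (ln b <= ln a) by (destruct (Req_dec b a); [subst; lra| left; apply ln_increasing; lra]).
   assert (ln d <= ln a) by (destruct (Req_dec d a); [rewrite H3; lra| left; apply ln_increasing; unfold d in *; lra]).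
   assert (g b + g d - g a = b * (ln a - ln b) + d * (ln a - ln d)) by (unfold g, d; ring).
   assert (0 <= b * (ln a - ln b)) by (apply Rmult_le_pos; lra).
   assert (0 <= d * (ln a - ln d)) by (apply Rmult_le_pos; lra). lra.
 - pose proof (ln_diff b a H H1).
   assert (g b - g a = b * (ln a - ln b) + d * ln a) by (unfold g, d; ring).
   assert (0 < a * d) by (apply Rmult_lt_0_compat; lra).
   pose proof (ln_e_bound (a * d) H4). rewrite ln_mult in H5 by lra.
   assert (a * d <= 5/4 * /4) by (apply Rmult_le_compat; unfold d in *; lra).
   assert (d * (1 + ln a + ln d) <= 0) by (rewrite <- (Rmult_0_r d); apply Rmult_le_compat_l; lra).
   assert (d * (1 + ln a + ln d) = d + d * ln a + d * ln d) by ring.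
   assert (g d = - d * ln d) by reflexivity. unfold d in *. lra. Qed.

Lemma Bg a b : 0 <= a <= 5/4 -> 0 <= b <= 5/4 -> Rabs (a - b) <= /4 ->
  Rabs (g a - g b) <= g (Rabs (a - b)).
Proof. intros Ha Hb Hd. destruct (Rle_dec b a).
 - rewrite (Rabs_right (a - b)) in * by lra. destruct (B0 a b) as [H1 H2]; try lra.
   apply Rabs_le; lra.
 - rewrite (Rabs_left (a - b)) in * by lra. destruct (B0 b a) as [H1 H2]; try lra.
   replace (- (a - b)) with (b - a) by ring. apply Rabs_le; lra. Qed.

Lemma rowA nY c d D (a b : nat -> R) :
 0 < c -> 1 <= d -> c * d = INR nY -> 0 <= D <= /4 ->
 (forall y, (y < nY)%nat -> (0 <= a y <= 5/4 /\ 0 <= b y <= 5/4) /\ Rabs (a y - b y) <= D) ->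
 sumR nY (fun y => Rabs (a y - b y)) <= c * D ->
 Rabs (sumR nY (fun y => g (a y)) - sumR nY (fun y => g (b y))) <= - D * c * ln (D / d).
Proof. intros Hc Hd Hcd HD Hy Hs. rewrite <- sumR_minus.
 eapply Rle_trans. apply sumR_abs.
 eapply Rle_trans. apply sumR_le with (g := fun y => g (Rabs (a y - b y))).
 { intros i Hi. destruct (Hy i Hi) as [[Ha Hb] Hab]. apply Bg; lra. }
 destruct (Req_dec D 0) as [->|HD0].
 - replace (- 0 * c * ln (0 / d)) with 0 by ring.
   rewrite <- (Rmult_0_r (INR nY)), <- sumR_const. apply sumR_le. intros i Hi.
   destruct (Hy i Hi) as [_ Hab]. pose proof (Rabs_pos (a i - b i)).
   replace (Rabs (a i - b i)) with 0 by lra. rewrite g0. lra.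
 - set (m := D / d). assert (0 < m) by (unfold m; apply Rdiv_lt_0_compat; lra).
   assert (m <= D) by (unfold m; apply Rmult_le_reg_r with d; [lra|]; field_simplify; nra).
   eapply Rle_trans. apply sumR_le with (g := fun y => g m + (-1 - ln m) * (Rabs (a y - b y) - m)).
   { intros i Hi. apply tangent; auto. apply Rabs_pos. }
   rewrite sumR_plus, sumR_const, sumR_scal, sumR_minus, sumR_const.
   assert (0 <= -1 - ln m) by (apply deriv_nonneg; lra).
   assert (INR nY * m = c * D) by (unfold m; rewrite <- Hcd; field; lra).
   assert ((-1 - ln m) * (sumR nY (fun y => Rabs (a y - b y)) - INR nY * m) <= 0).
   { rewrite <- (Rmult_0_r (-1 - ln m)). apply Rmult_le_compat_l; lra. }
   assert (INR nY * g m = - D * c * ln m) by (unfold g, m; rewrite <- Hcd; field; lra).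
   lra. Qed.

Lemma decomp nX nY Q V : (forall x, (x < nX)%nat -> 0 <= Q x) ->
 (forall x y, (x < nX)%nat -> (y < nY)%nat -> 0 <= V x y) ->
 false_mi nX nY Q V = sumR nY (fun y => g (sumR nX (fun x' => Q x' * V x' y)))
   - sumR nX (fun x => Q x * sumR nY (fun y => g (V x y))).
Proof. intros HQ HV. unfold false_mi.
 set (S := fun y => sumR nX (fun x' => Q x' * V x' y)).
 rewrite (sumR_ext nX _ (fun x => sumR nY (fun y => Q x * V x y * ln (V x y))
    - sumR nY (fun y => Q x * V x y * ln (S y)))).
 2:{ intros x Hx. rewrite <- sumR_minus. apply sumR_ext. intros y Hy.
     destruct (Req_dec (Q x) 0) as [E|E]. { rewrite E. ring. }
     destruct (Req_dec (V x y) 0) as [E2|E2]. { rewrite E2. ring. }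
     assert (0 < Q x * V x y) by (apply Rmult_lt_0_compat; [specialize (HQ x Hx)|specialize (HV x y Hx Hy)]; lra).
     assert (Q x * V x y <= S y).
     { unfold S. apply (sumR_term nX (fun x' => Q x' * V x' y)); auto.
       intros j Hj. apply Rmult_le_pos; auto. }
     assert (0 < V x y) by (specialize (HV x y Hx Hy); lra).
     unfold S in *. unfold Rdiv. rewrite ln_mult, ln_Rinv by (try apply Rinv_0_lt_compat; lra). ring. }
 rewrite sumR_minus. rewrite (sumR_swap nX nY (fun x y => Q x * V x y * ln (S y))).
 rewrite (sumR_ext nY (fun y => sumR nX (fun x => Q x * V x y * ln (S y))) (fun y => - g (S y))).
 2:{ intros y Hy. 
     rewrite (sumR_ext nX _ (fun i => ln (S y) * (Q i * V i y))). 2:{ intros; ring. }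
     rewrite sumR_scal. unfold g, S. ring. }
 rewrite (sumR_ext nX (fun x => sumR nY (fun y => Q x * V x y * ln (V x y))) (fun x => - (Q x * sumR nY (fun y => g (V x y))))).
 2:{ intros x Hx. unfold g. rewrite <- sumR_scal.
     rewrite <- (Rmult_1_l (sumR nY _)). replace 1 with (- -1) by ring.
     rewrite Ropp_mult_distr_l_reverse. f_equal. rewrite <- sumR_scal. apply sumR_ext. intros; ring. }
 replace (sumR nX (fun x => - (Q x * sumR nY (fun y => g (V x y))))) with (-1 * sumR nX (fun x => (Q x * sumR nY (fun y => g (V x y))))).
 2:{ rewrite <- sumR_scal. apply sumR_ext; intros; ring. }
 replace (sumR nY (fun y => - g (S y))) with (-1 * sumR nY (fun y => g (S y))).
 2:{ rewrite <- sumR_scal. apply sumR_ext; intros; ring. }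
  unfold S. ring. Qed.

Lemma Rpower_pos a b : 0 < Rpower a b.
Proof. unfold Rpower. apply exp_pos. Qed.

Lemma powR_nonneg a b : 0 <= powR a b.
Proof. unfold powR. destruct (Rle_dec a 0). lra. left; apply Rpower_pos. Qed.

Lemma powR_pos a b : 0 < a -> powR a b = Rpower a b.
Proof. intros H. unfold powR. destruct (Rle_dec a 0); [lra|auto]. Qed.

Lemma powR_0 b : powR 0 b = 0.
Proof. unfold powR. destruct (Rle_dec 0 0); lra. Qed.

Lemma exp_le_mono a b : a <= b -> exp a <= exp b.
Proof. intros [H|H]. left; apply exp_increasing; auto. subst; lra. Qed.

Lemma young z a : 0 <= z -> 0 < a <= 1 -> powR z a <= a * z + (1 - a).
Proof. intros Hz Ha. destruct (Req_dec z 0) as [->|Hz0]. rewrite powR_0; lra.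
 rewrite powR_pos by lra. set (m := a * z + (1 - a)).
 assert (0 < m) by (unfold m; nra).
 pose proof (ln_diff m z H ltac:(lra)). pose proof (ln_diff m 1 H ltac:(lra)). rewrite ln_1 in H1.
 assert (m * (a * ln z - ln m) <= 0).
 { assert (a * (m * (ln z - ln m)) <= a * (z - m)) by (apply Rmult_le_compat_l; lra).
   assert ((1-a) * (m * (0 - ln m)) <= (1-a) * (1 - m)) by (apply Rmult_le_compat_l; lra).
   assert (a * (z - m) + (1-a) * (1 - m) = 0) by (unfold m; ring).
   assert (m * (a * ln z - ln m) = a * (m * (ln z - ln m)) + (1-a) * (m * (0 - ln m))) by ring.
   lra. }
 assert (a * ln z - ln m <= 0).
 { destruct (Rle_dec (a * ln z - ln m) 0); auto. exfalso.
   assert (0 < m * (a * ln z - ln m)) by (apply Rmult_lt_0_compat; lra). lra. }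
 unfold Rpower. rewrite <- (exp_ln m) by auto. apply exp_le_mono. lra. Qed.

Definition inv_ok p : valid_p p -> 0 <= inv_p p <= 1.
Proof. destruct p; simpl; intros H; [|lra]. split. left; apply Rinv_0_lt_compat; lra.
 rewrite <- Rinv_1. apply Rinv_le_contravar; lra. Qed.

Lemma cd_props nY p : (1 <= nY)%nat -> valid_p p ->
  0 < Rpower (INR nY) (1 - inv_p p) /\ 1 <= Rpower (INR nY) (inv_p p) /\
  Rpower (INR nY) (1 - inv_p p) * Rpower (INR nY) (inv_p p) = INR nY.
Proof. intros HY Hp. pose proof (inv_ok p Hp). assert (1 <= INR nY) by (apply (le_INR 1); auto).
 split; [apply Rpower_pos|split].
 - unfold Rpower. eapply Rle_trans; [|apply exp_ineq1_le].
   assert (0 <= ln (INR nY)).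
   { destruct (Req_dec (INR nY) 1) as [E|E]. rewrite E, ln_1; lra.
     left. rewrite <- ln_1. apply ln_increasing; lra. }
   assert (0 <= inv_p p * ln (INR nY)) by (apply Rmult_le_pos; lra). lra.
 - rewrite <- Rpower_plus. replace (1 - inv_p p + inv_p p) with 1 by ring. apply Rpower_1. lra. Qed.

Lemma row_adm nX nY p (D : nat -> nat -> R) : (1 <= nY)%nat -> valid_p p ->
  forall x, (x < nX)%nat ->
  (forall y, (y < nY)%nat -> Rabs (D x y) <= norm_p p nX nY D) /\
  sumR nY (fun y => Rabs (D x y)) <= Rpower (INR nY) (1 - inv_p p) * norm_p p nX nY D.
Proof. intros HY Hp x Hx. assert (1 <= INR nY) by (apply (le_INR 1); auto).
 destruct p as [q|]; simpl.
 - simpl in Hp. set (T := sumR nX (fun x => sumR nY (fun y => powR (Rabs (D x y)) q))).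
   assert (Hrow : forall y, (y < nY)%nat -> powR (Rabs (D x y)) q <= sumR nY (fun y => powR (Rabs (D x y)) q)).
   { intros y Hy. apply (sumR_term nY (fun y => powR (Rabs (D x y)) q)); auto. intros; apply powR_nonneg. }
   assert (HrowT : sumR nY (fun y => powR (Rabs (D x y)) q) <= T).
   { apply (sumR_term nX (fun x => sumR nY (fun y => powR (Rabs (D x y)) q))); auto.
     intros; apply sumR_nonneg; intros; apply powR_nonneg. }
   assert (H1 : forall y, (y < nY)%nat -> Rabs (D x y) <= powR T (/ q)).
   { intros y Hy. destruct (Req_dec (Rabs (D x y)) 0) as [E|E]. rewrite E; apply powR_nonneg.
     pose proof (Rabs_pos (D x y)).
     assert (0 < powR (Rabs (D x y)) q) by (rewrite powR_pos by lra; apply Rpower_pos).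
     specialize (Hrow y Hy). rewrite (powR_pos T) by lra.
     replace (Rabs (D x y)) with (Rpower (powR (Rabs (D x y)) q) (/ q)) at 1.
     2:{ rewrite powR_pos by lra. rewrite Rpower_mult. replace (q * / q) with 1 by (field; lra).
         apply Rpower_1; lra. }
     apply Rle_Rpower_l. left; apply Rinv_0_lt_compat; lra. lra. }
   split; auto.
   destruct (Req_dec T 0) as [E|E].
   { rewrite E, powR_0 in *. rewrite Rmult_0_r. rewrite <- (Rmult_0_r (INR nY)), <- sumR_const.
     apply sumR_le. intros; auto. }
   assert (0 < T) by (pose proof (sumR_nonneg nX (fun x => sumR nY (fun y => powR (Rabs (D x y)) q)) ltac:(intros; apply sumR_nonneg; intros; apply powR_nonneg)); fold T in H0; lra).
   set (a := / q). assert (0 < a <= 1) by (unfold a; split; [apply Rinv_0_lt_compat; lra| rewrite <- Rinv_1; apply Rinv_le_contravar; lra]).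
   set (K := INR nY). set (r := Rpower (K / T) a).
   assert (0 < K / T) by (apply Rdiv_lt_0_compat; unfold K; lra).
   assert (Hy : forall y, (y < nY)%nat -> r * Rabs (D x y) <= a * (K / T * powR (Rabs (D x y)) q) + (1 - a)).
   { intros y Hy. eapply Rle_trans; [|apply young; [apply Rmult_le_pos; [lra| apply powR_nonneg]| auto]].
     destruct (Req_dec (Rabs (D x y)) 0) as [E0|E0].
     { rewrite E0, powR_0, Rmult_0_r, Rmult_0_r. apply powR_nonneg. }
     pose proof (Rabs_pos (D x y)).
     rewrite (powR_pos (Rabs (D x y))) by lra. rewrite powR_pos by (apply Rmult_lt_0_compat; [lra|apply Rpower_pos]).
     rewrite <- Rpower_mult_distr by (auto; apply Rpower_pos). rewrite Rpower_mult.
     unfold a. replace (q * / q) with 1 by (field; lra). rewrite Rpower_1 by lra. unfold r, a; lra. }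
   assert (r * sumR nY (fun y => Rabs (D x y)) <= K).
   { rewrite <- sumR_scal. eapply Rle_trans. apply sumR_le. exact Hy.
     rewrite sumR_plus, sumR_scal, sumR_scal, sumR_const. fold K.
     assert (a * (K / T * sumR nY (fun y => powR (Rabs (D x y)) q)) <= a * (K / T * T)).
     { apply Rmult_le_compat_l; [lra|]. apply Rmult_le_compat_l; lra. }
     replace (a * (K / T * T)) with (a * K) in H4 by (field; lra). assert (a*K + K*(1-a) = K) by ring. lra. }
   assert (0 < r) by apply Rpower_pos.
   assert (Rpower K (1 - a) * Rpower T a * r = K).
   { unfold r. rewrite Rmult_assoc, Rpower_mult_distr by lra. replace (T * (K / T)) with K by (field; lra).
     rewrite <- Rpower_plus. replace (1 - a + a) with 1 by ring. apply Rpower_1; unfold K; lra. }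
   assert (0 < Rpower K (1 - a) * Rpower T a) by (apply Rmult_lt_0_compat; apply Rpower_pos).
   apply Rmult_le_reg_l with r; auto. rewrite (powR_pos T) by lra. fold a K.
   assert (r * (Rpower K (1 - a) * Rpower T a) = K) by (rewrite Rmult_comm; exact H6). lra.
 - assert (H1 : forall y, (y < nY)%nat -> Rabs (D x y) <= maxR nX (fun x => maxR nY (fun y => Rabs (D x y)))).
   { intros y Hy. eapply Rle_trans. apply (maxR_ge nY (fun y => Rabs (D x y))); auto.
     apply (maxR_ge nX (fun x => maxR nY (fun y => Rabs (D x y)))); auto. }
   split; auto. replace (1 - 0) with 1 by ring. rewrite Rpower_1 by lra.
   rewrite <- sumR_const. apply sumR_le. auto. Qed.

Lemma div_nonneg a b : 0 <= a -> 0 < b -> 0 <= a / b.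
Proof. intros. unfold Rdiv. apply Rmult_le_pos; [lra| left; apply Rinv_0_lt_compat; lra]. Qed.

Lemma h_g c d t : 0 < d -> - t * c * ln (t / d) = c * d * g (t / d).
Proof. intros. unfold g. field. lra. Qed.

Lemma g_concave u v l : 0 <= u -> 0 <= v -> 0 <= l <= 1 ->
  l * g u + (1 - l) * g v <= g (l * u + (1 - l) * v).
Proof. intros Hu Hv Hl. set (w := l * u + (1 - l) * v).
 assert (0 <= l * u) by (apply Rmult_le_pos; lra). assert (0 <= (1-l) * v) by (apply Rmult_le_pos; lra).
 destruct (Req_dec w 0) as [E|E].
 - assert (l * u = 0) by (unfold w in E; lra). assert ((1-l) * v = 0) by (unfold w in E; lra).
   assert (l * g u = 0) by (destruct (Rmult_integral _ _ H1) as [->| ->]; [ring| rewrite g0; ring]).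
   assert ((1-l) * g v = 0) by (destruct (Rmult_integral _ _ H2) as [->| ->]; [ring| rewrite g0; ring]).
   rewrite E, g0. lra.
 - assert (0 < w) by (unfold w in *; lra).
   pose proof (tangent w u H1 Hu). pose proof (tangent w v H1 Hv).
   apply Rmult_le_compat_l with (r := l) in H2; [|lra].
   apply Rmult_le_compat_l with (r := 1 - l) in H3; [|lra].
   assert (l * (g w + (-1 - ln w) * (u - w)) + (1 - l) * (g w + (-1 - ln w) * (v - w)) = g w + (-1 - ln w) * (w - w)) by (unfold w; ring).
   replace (w - w) with 0 in H4 by ring. lra. Qed.

Lemma h_props c d : 0 < c -> 1 <= d ->
  concave_on 0 (/4) (fun t => - t * c * ln (t / d)) /\
  nondecreasing_on 0 (/4) (fun t => - t * c * ln (t / d)).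
Proof. intros Hc Hd. assert (0 < c * d) by (apply Rmult_lt_0_compat; lra). split.
 - intros u v l Hu Hv Hl. rewrite !h_g by lra.
   replace ((l * u + (1 - l) * v) / d) with (l * (u/d) + (1 - l) * (v/d)) by (field; lra).
   pose proof (g_concave (u/d) (v/d) l ltac:(apply div_nonneg; lra) ltac:(apply div_nonneg; lra) Hl).
   apply Rmult_le_compat_l with (r := c * d) in H0; lra.
 - intros u v Hu Hv Huv. rewrite !h_g by lra. apply Rmult_le_compat_l; [lra|].
   destruct (Req_dec v 0) as [E|E]. { assert (u = 0) by lra. subst; lra. }
   assert (0 < v / d) by (apply Rdiv_lt_0_compat; lra).
   assert (v / d <= /4).
   { apply Rmult_le_reg_r with d; [lra|]. field_simplify; [|lra]. nra. }
   pose proof (tangent (v/d) (u/d) H0 ltac:(apply div_nonneg; lra)).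
   pose proof (deriv_nonneg (v/d) ltac:(lra)).
   assert (u / d - v / d <= 0) by (unfold Rdiv; assert (0 < /d) by (apply Rinv_0_lt_compat; lra); nra).
   assert ((-1 - ln (v/d)) * (u / d - v / d) <= 0) by (rewrite <- (Rmult_0_r (-1 - ln (v/d))); apply Rmult_le_compat_l; lra).
   lra. Qed.

Lemma abs_between x a : Rabs x <= a -> -a <= x <= a.
Proof. intros H. unfold Rabs in H. destruct (Rcase_abs x); lra. Qed.

Lemma comb a b c e F : Rabs (a - c) <= F -> Rabs (b - e) <= F -> Rabs ((a - b) - (c - e)) <= 2 * F.
Proof. intros H1 H2. replace ((a - b) - (c - e)) with ((a - c) + - (b - e)) by ring.
 eapply Rle_trans. apply Rabs_triang. rewrite Rabs_Ropp. lra. Qed.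

Lemma sumQk n Q k : sumR n Q = 1 -> sumR n (fun x => Q x * k) = k.
Proof. intros H. rewrite (sumR_ext n _ (fun x => k * Q x)) by (intros; ring). rewrite sumR_scal, H. ring. Qed.

Lemma main_bound nX nY Q W Wt Dl c d :
  is_distr nX Q ->
  (forall x y, (x < nX)%nat -> (y < nY)%nat -> 0 <= W x y <= 1) ->
  (forall x y, (x < nX)%nat -> (y < nY)%nat -> 0 <= Wt x y) ->
  (forall x, (x < nX)%nat ->
    (forall y, (y < nY)%nat -> Rabs (Wt x y - W x y) <= Dl) /\
    sumR nY (fun y => Rabs (Wt x y - W x y)) <= c * Dl) ->
  0 < c -> 1 <= d -> c * d = INR nY -> 0 <= Dl <= /4 ->
  Rabs (false_mi nX nY Q Wt - false_mi nX nY Q W) <= 2 * (- Dl * c * ln (Dl / d)).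
Proof. intros [HQ0 HQ1] HW HWt Hrow Hc Hd Hcd HD.
 set (F := - Dl * c * ln (Dl / d)).
 rewrite !decomp; auto; [| intros; apply HW; auto].
 set (St := fun y => sumR nX (fun x' => Q x' * Wt x' y)).
 set (S := fun y => sumR nX (fun x' => Q x' * W x' y)).
 assert (HSdiff : forall y, (y < nY)%nat -> Rabs (St y - S y) <= sumR nX (fun x => Q x * Rabs (Wt x y - W x y))).
 { intros y Hy. unfold St, S. rewrite <- sumR_minus.
   eapply Rle_trans. apply sumR_abs. apply sumR_le. intros x Hx.
   replace (Q x * Wt x y - Q x * W x y) with (Q x * (Wt x y - W x y)) by ring.
   rewrite Rabs_mult, (Rabs_right (Q x)) by (specialize (HQ0 x Hx); lra). lra. }
 assert (HS : forall y, (y < nY)%nat -> 0 <= S y <= 1).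
 { intros y Hy. unfold S. split.
   - apply sumR_nonneg. intros x Hx. apply Rmult_le_pos; [apply HQ0|apply HW]; auto.
   - rewrite <- HQ1. apply sumR_le. intros x Hx. specialize (HQ0 x Hx). specialize (HW x y Hx Hy).
     rewrite <- (Rmult_1_r (Q x)) at 2. apply Rmult_le_compat_l; lra. }
 assert (HSt : forall y, (y < nY)%nat -> 0 <= St y).
 { intros y Hy. unfold St. apply sumR_nonneg. intros x Hx. apply Rmult_le_pos; [apply HQ0|apply HWt]; auto. }
 assert (HSd : forall y, (y < nY)%nat -> Rabs (St y - S y) <= Dl).
 { intros y Hy. eapply Rle_trans. apply HSdiff; auto.
   rewrite <- (sumQk nX Q Dl HQ1). apply sumR_le.
   intros x Hx. apply Rmult_le_compat_l. apply HQ0; auto. apply Hrow; auto. }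
 assert (HA : Rabs (sumR nY (fun y => g (St y)) - sumR nY (fun y => g (S y))) <= F).
 { apply (rowA nY c d); auto.
   - intros y Hy. specialize (HS y Hy). specialize (HSt y Hy). specialize (HSd y Hy).
     pose proof (abs_between _ _ HSd) as HH. split; [lra| auto].
   - eapply Rle_trans. apply sumR_le. intros y Hy. apply HSdiff; auto.
     rewrite <- sumR_swap. rewrite <- (sumQk nX Q (c * Dl) HQ1). apply sumR_le.
     intros x Hx. rewrite sumR_scal. apply Rmult_le_compat_l. apply HQ0; auto. apply Hrow; auto. }
 assert (HB : forall x, (x < nX)%nat -> Rabs (sumR nY (fun y => g (Wt x y)) - sumR nY (fun y => g (W x y))) <= F).
 { intros x Hx. apply (rowA nY c d); auto. 2: apply Hrow; auto.
   intros y Hy. specialize (HW x y Hx Hy). specialize (HWt x y Hx Hy). destruct (Hrow x Hx) as [H1 _].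
   specialize (H1 y Hy). pose proof (abs_between _ _ H1) as HH.
   split; [lra| auto]. }
 assert (Hsum : Rabs (sumR nX (fun x => Q x * sumR nY (fun y => g (Wt x y))) - sumR nX (fun x => Q x * sumR nY (fun y => g (W x y)))) <= F).
 { rewrite <- sumR_minus. eapply Rle_trans. apply sumR_abs.
   rewrite <- (sumQk nX Q F HQ1). apply sumR_le.
   intros x Hx. rewrite <- Rmult_minus_distr_l, Rabs_mult, (Rabs_right (Q x)) by (specialize (HQ0 x Hx); lra).
   apply Rmult_le_compat_l. apply HQ0; auto. apply HB; auto. }
 unfold St, S in HA. apply comb; auto. Qed.

Lemma norm_nonneg p nX nY D : 0 <= norm_p p nX nY D.
Proof. destruct p; simpl. apply powR_nonneg. apply maxR_nonneg. Qed.

Theorem lemma8 (nX nY : nat) (p : pext) (W Wt : nat -> nat -> R) :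
  (0 < nX)%nat ->
  valid_p p ->
  is_channel nX nY W ->
  is_false_channel nX nY Wt ->
  let Delta := norm_p p nX nY (fun x y => Wt x y - W x y) in
  (Delta <= / 4 ->
     (forall Q, is_distr nX Q ->
        Rabs (false_mi nX nY Q Wt - mutual_info nX nY Q W) <= 2 * f_p p nY Delta) /\
     (forall C Ct, is_lub (mi_values nX nY W) C -> is_lub (false_mi_values nX nY Wt) Ct ->
        Rabs (Ct - C) <= 2 * f_p p nY Delta)) /\
  concave_on 0 (/ 4) (f_p p nY) /\
  nondecreasing_on 0 (/ 4) (f_p p nY).
Proof. intros HX Hp [HW0 HW1] HWt Delta.
 assert (HY : (1 <= nY)%nat).
 { destruct nY; [|lia]. specialize (HW1 0%nat HX). simpl in HW1. lra. }
 destruct (cd_props nY p HY Hp) as [Hc [Hd Hcd]].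
 set (c := Rpower (INR nY) (1 - inv_p p)) in *.
 set (d := Rpower (INR nY) (inv_p p)) in *.
 assert (Hf : forall t, f_p p nY t = - t * c * ln (t / d)) by (intros; reflexivity).
 destruct (h_props c d Hc Hd) as [Hcc Hnd].
 split; [| split; intros ? ? ?; rewrite !Hf; [apply Hcc | apply Hnd]; auto].
 intros HD. assert (HD0 : 0 <= Delta) by apply norm_nonneg.
 assert (HW : forall x y, (x < nX)%nat -> (y < nY)%nat -> 0 <= W x y <= 1).
 { intros x y Hx Hy. split; auto. rewrite <- (HW1 x Hx).
   apply (sumR_term nY (fun y => W x y)); auto. }
 assert (Hrow : forall x, (x < nX)%nat ->
    (forall y, (y < nY)%nat -> Rabs (Wt x y - W x y) <= Delta) /\
    sumR nY (fun y => Rabs (Wt x y - W x y)) <= c * Delta).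
 { intros x Hx. apply (row_adm nX nY p (fun x y => Wt x y - W x y) HY Hp x Hx). }
 assert (HQ : forall Q, is_distr nX Q ->
    Rabs (false_mi nX nY Q Wt - mutual_info nX nY Q W) <= 2 * f_p p nY Delta).
 { intros Q HQ. rewrite Hf. unfold mutual_info. apply (main_bound nX nY Q W Wt Delta c d); auto; lra. }
 split; auto.
 intros C Ct [HCu HCl] [HCtu HCtl].
 assert (Ct <= C + 2 * f_p p nY Delta).
 { apply HCtl. intros r [Q [HQd ->]]. pose proof (HQ Q HQd).
   assert (mutual_info nX nY Q W <= C) by (apply HCu; exists Q; auto).
   apply abs_between in H. lra. }
 assert (C <= Ct + 2 * f_p p nY Delta).
 { apply HCl. intros r [Q [HQd ->]]. pose proof (HQ Q HQd).
   assert (false_mi nX nY Q Wt <= Ct) by (apply HCtu; exists Q; auto).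
   apply abs_between in H0. lra. }
 apply Rabs_le; lra. Qed.
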